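(* A scheduling policy $\eta$ fulfills a strictly feasible system if, in every frame $k$, it maximizes $\sum_{X\in S}\tilde q_X(k)\,d_X(k)$ among all feasible $[q_X]$, i.e. $\sum_{X\in S}\tilde q_X(k)\,d_X(k)\ge \max_{[q_X]\text{ feasible}}\sum_{X\in S} q_X\,d_X(k)$. It is a feasibility optimal policy if this holds for all strictly feasible systems.
   Context: A system consists of a finite set $S$ of tasks. Time is slotted, $t\in\{0,1,2,\dots\}$. Each task $X\in S$ has a period $\tau_X$ (a positive integer); time is partitioned into consecutive periods of $X$ of $\tau_X$ slots each, the first starting at $t=0$, and in each period $X$ has one job, removed at the end of the period. Let $T=\mathrm{lcm}\{\tau_X : X\in S\}$; time is partitioned into consecutive frames of $T$ slots each, the $k$-th frame ($k=1,2,\dots$) being the $k$-th such block starting from $t=0$. A scheduling policy (possibly randomized) chooses in each slot either to idle or to execute the job of exactly one task. Each task $X$ has rewards $r^1_X\ge r^2_X\ge\dots\ge r^{\tau_X}_X\ge 0$: executing the job of $X$ for the $i$-th time within a period yields reward $r^i_X$ to $X$. Let $s_X(t)$ be the total reward obtained by $X$ between time 0 and $t$; the average reward is $q_X=\liminf_{t\to\infty}s_X(t)/(t/T)$. Each task has a minimum requirement $q^*_X>0$; a policy fulfills the system if $q_X\ge q^*_X$ with probability 1 for all $X\in S$. The system is feasible if some policy fulfills it, and strictly feasible if there is $\epsilon>0$ such that the same system with requirements $[(1+\epsilon)q^*_X]$ is feasible. A vector $[q_X : X\in S]$ is called feasible if the system with the same tasks, periods and rewards and requirements $[q_X]$ is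 feasible. A policy is feasibility optimal if it fulfills all strictly feasible systems. Let $\tilde q_X(k)$ be the total reward obtained by $X$ during the $k$-th frame. The debt of $X$ is $d_X(0)=0$, $d_X(k)=[d_X(k-1)+q^*_X-\tilde q_X(k)]^+$ for $k>0$, with $[x]^+=\max\{x,0\}$. *)

(* Defs.v *)
From HB Require Import structures.
From mathcomp Require Import all_boot all_order all_algebra.
From mathcomp Require Import all_classical all_reals all_analysis.
Set Implicit Arguments. Unset Strict Implicit. Unset Printing Implicit Defensive.
Import Order.TTheory GRing.Theory Num.Theory.
Local Open Scope ring_scope.

(* A system: tasks form a finite type [S]; [tau X] is the period of X;
   [r X i] is the reward r^i_X for the i-th execution (i >= 1) within a period.
   A schedule [sigma : nat -> option S] says, for each slot t, whether it idles
   ([None]) or executes the job of task X ([Some X]). *)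

Section Model.
Variables (R : realType) (S : finType) (tau : S -> nat) (r : S -> nat -> R).

Definition frameT : nat := \big[lcmn/1%N]_(X : S) tau X.

Definition period_start (X : S) (t : nat) : nat := (t %/ tau X * tau X)%N.

Definition execs_before (sigma : nat -> option S) (X : S) (t : nat) : nat :=
  count (fun u => sigma u == Some X) (iota (period_start X t) (t - period_start X t)).

Definition slot_reward (sigma : nat -> option S) (X : S) (t : nat) : R :=
  if sigma t == Some X then r X (execs_before sigma X t).+1 else 0.

Definition cum_reward (sigma : nat -> option S) (X : S) (t : nat) : R :=
  \sum_(0 <= u < t) slot_reward sigma X u.

Definition avg_reward (sigma : nat -> option S) (X : S) : \bar R :=
  limn_einf (fun t : nat => (cum_reward sigma X t / (t%:R / (frameT%:R)))%:E).

(* tilde q_X(k+1): reward of X during the (k+1)-th frame, i.e. slots kT .. (k+1)T - 1 *)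
Definition frame_reward (sigma : nat -> option S) (X : S) (k : nat) : R :=
  \sum_(k * frameT <= u < k.+1 * frameT) slot_reward sigma X u.

Fixpoint debt (qstar : S -> R) (sigma : nat -> option S) (X : S) (k : nat) : R :=
  match k with
  | 0 => 0
  | k'.+1 => Num.max (debt qstar sigma X k' + qstar X - frame_reward sigma X k') 0
  end.

(* A (possibly randomized) policy is a random schedule on a probability space
   (Omega, P); it fulfills requirements [q] if, for every task X,
   q_X >= q*_X holds with probability 1. *)
Definition fulfills (d : measure_display) (Omega : measurableType d)
  (P : probability Omega R) (sched : Omega -> nat -> option S) (q : S -> R) : Prop :=
  forall X : S, {ae P, forall w, ((q X)%:E <= avg_reward (sched w) X)%E}.

Definition feasible (q : S -> R) : Prop :=
  exists (d : measure_display) (Omega : measurableType d)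
         (P : probability Omega R) (sched : Omega -> nat -> option S),
    fulfills P sched q.

Definition strictly_feasible (qstar : S -> R) : Prop :=
  exists eps : R, 0 < eps /\ feasible (fun X => (1 + eps) * qstar X).

Definition valid_system (qstar : S -> R) : Prop :=
  (forall X, (0 < tau X)%N) /\
  (forall X i, (1 <= i < tau X)%N -> r X i.+1 <= r X i) /\
  (forall X, 0 <= r X (tau X)) /\
  (forall X, 0 < qstar X).

End Model.

(* Main.v *)
Require Import Defs.
From HB Require Import structures.
From mathcomp Require Import all_boot all_order all_algebra.
From mathcomp Require Import all_classical all_reals all_analysis.
From mathcomp Require Import zify ring lra.
Set Implicit Arguments. Unset Strict Implicit. Unset Printing Implicit Defensive.
Import Order.TTheory GRing.Theory Num.Theory.
Local Open Scope ring_scope.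

Section Proofs.
Variables (R : realType) (S : finType) (tau : S -> nat) (r : S -> nat -> R).
Variable qstar : S -> R.
Hypothesis V : valid_system tau r qstar.

Lemma r_le1 X i : (1 <= i <= tau X)%N -> r X i <= r X 1.
Proof.
case: V => _ [Hm _].
move=> /andP[]; elim: i => // -[|i] IH _ Hi //.
apply: le_trans (Hm X i.+1 _) (IH isT (ltnW Hi)); lia.
Qed.

Lemma r_ge0 X i : (1 <= i <= tau X)%N -> 0 <= r X i.
Proof.
case: V => _ [Hm [Hl _]].
move=> Hi; have : (tau X - i = tau X - i)%N by [].
move: {2}(tau X - i)%N => n; elim: n i Hi => [|n IH] i Hi Hn.
  by have -> : i = tau X by lia.
apply: le_trans (IH i.+1 _ _) (Hm X i _); lia.
Qed.

Lemma execs_lt sigma X t : (0 < tau X)%N -> (execs_before tau sigma X t < tau X)%N.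
Proof.
move=> Ht; rewrite /execs_before.
apply: leq_ltn_trans (count_size _ _) _; rewrite size_iota /period_start.
have := divn_eq t (tau X); have := ltn_pmod t Ht; lia.
Qed.

Lemma slot_bounds sigma X t : 0 <= slot_reward tau r sigma X t <= r X 1.
Proof.
have Ht : (0 < tau X)%N by case: V.
rewrite /slot_reward; case: ifP => _.
  have Hi : (1 <= (execs_before tau sigma X t).+1 <= tau X)%N.
    by have := execs_lt sigma t Ht; lia.
  by rewrite r_ge0 // r_le1.
by rewrite lexx /=; apply: le_trans (r_ge0 (i:=1) _) _ => //; lia.
Qed.

Definition T := frameT tau.

Lemma T_gt0 : (0 < T)%N.
Proof.
rewrite /T /frameT; elim/big_ind: _ => //.
  by move=> a b Ha Hb; rewrite lcmn_gt0 Ha Hb.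
by move=> X _; case: V.
Qed.

Lemma frame_bounds sigma X k :
  0 <= frame_reward tau r sigma X k <= T%:R * r X 1.
Proof.
rewrite /frame_reward -/T; apply/andP; split.
  by apply: sumr_ge0 => u _; have /andP[] := slot_bounds sigma X u.
have -> : T%:R * r X 1 = \sum_(k * T <= u < k.+1 * T) r X 1.
  by rewrite sumr_const_nat mulr_natl; congr (_ *+ _); rewrite mulSn; lia.
by apply: ler_sum => u _; have /andP[] := slot_bounds sigma X u.
Qed.

Lemma cum_frames sigma X k :
  cum_reward tau r sigma X (k * T) = \sum_(j < k) frame_reward tau r sigma X j.
Proof.
elim: k => [|k IH]; first by rewrite mul0n /cum_reward big_geq // big_ord0.
rewrite big_ord_recr /= -IH /cum_reward /frame_reward -/T.
rewrite (big_cat_nat _ (n:=k * T)) //= ?leq0n //; lia.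
Qed.

Lemma cum_mono sigma X m n : (m <= n)%N ->
  cum_reward tau r sigma X m <= cum_reward tau r sigma X n.
Proof.
move=> Hmn; rewrite /cum_reward (@big_cat_nat _ _ _ m 0 n) /= ?leq0n // lerDl.
by apply: sumr_ge0 => u _; have /andP[] := slot_bounds sigma X u.
Qed.

Lemma debt_ge0 sigma X k : 0 <= debt tau r qstar sigma X k.
Proof. by case: k => //= k; rewrite le_max lexx orbT. Qed.

Lemma debt_lb sigma X k :
  k%:R * qstar X - \sum_(j < k) frame_reward tau r sigma X j
  <= debt tau r qstar sigma X k.
Proof.
elim: k => [|k IH]; first by rewrite big_ord0 /= mul0r subr0.
rewrite /= big_ord_recr /= le_max; apply/orP; left.
rewrite -natr1 mulrDl mul1r; lra.
Qed.

Definition Bc := \sum_(X : S) (qstar X + T%:R * r X 1) ^+ 2.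

Lemma debt_step sigma X k :
  debt tau r qstar sigma X k.+1 ^+ 2 <=
  debt tau r qstar sigma X k ^+ 2 + 2 * (debt tau r qstar sigma X k * qstar X
   - frame_reward tau r sigma X k * debt tau r qstar sigma X k)
   + (qstar X + T%:R * r X 1) ^+ 2.
Proof.
rewrite [debt _ _ _ _ _ k.+1]/=.
set d := debt tau r qstar sigma X k; set f := frame_reward tau r sigma X k.
have /andP[f0 f1] := frame_bounds sigma X k; rewrite -/f in f0 f1.
have q0 : 0 < qstar X by case: V => _ [_ [_ ]]; apply.
have d0 : 0 <= d := debt_ge0 sigma X k.
set a := d + qstar X - f.
have Ha : Num.max a 0 ^+ 2 <= a ^+ 2.
  have [h|h] := leP a 0.
    by rewrite expr0n /= sqr_ge0.
  by [].
apply: le_trans Ha _; rewrite /a; nra.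
Qed.

Lemma lyap sigma :
  (forall k, \sum_(X : S) qstar X * debt tau r qstar sigma X k
     <= \sum_(X : S) frame_reward tau r sigma X k * debt tau r qstar sigma X k) ->
  forall k, \sum_(X : S) debt tau r qstar sigma X k ^+ 2 <= k%:R * Bc.
Proof.
move=> Hd; elim=> [|k IH]; first by rewrite mul0r big1 // => X _; rewrite expr0n.
apply: le_trans (ler_sum _ (fun X _ => debt_step sigma X k)) _.
rewrite !big_split /= -mulr_sumr sumrB -/Bc.
have := Hd k; rewrite (eq_bigr (fun X => debt tau r qstar sigma X k * qstar X));
  last by move=> X _; rewrite mulrC.
rewrite -natr1; lra.
Qed.

Lemma Bc_ge0 : 0 <= Bc.
Proof. by apply: sumr_ge0 => X _; apply: sqr_ge0. Qed.

Lemma eventually_bound sigma X (dl : R) : 0 < dl ->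
  (forall k, \sum_(X : S) qstar X * debt tau r qstar sigma X k
     <= \sum_(X : S) frame_reward tau r sigma X k * debt tau r qstar sigma X k) ->
  exists N, forall t, (N <= t)%N ->
    qstar X - dl <= cum_reward tau r sigma X t / (t%:R / T%:R).
Proof.
move=> dl0 Hd.
have q0 : 0 < qstar X by case: V => _ [_ [_ ]]; apply.
have B0 := Bc_ge0.
set x := 4 * Bc / dl ^+ 2 + 2 * qstar X / dl.
have x0 : 0 <= x.
  by rewrite /x addr_ge0 // divr_ge0 // ?mulr_ge0 ?sqr_ge0 // ltW.
have Kx := archi_boundP x0; set K := Num.Def.archi_bound x in Kx.
have T0 := T_gt0.
exists (K.+1 * T)%N => t Ht.
set k := (t %/ T)%N.
have Hk : (K.+1 <= k)%N by rewrite /k leq_divRL.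
have Htk := divn_eq t T; have Hm := ltn_pmod t T0.
set m := (t %% T)%N in Htk Hm.
have tR : t%:R = k%:R * T%:R + m%:R :> R by rewrite Htk -/k natrD natrM.
have mlt : m%:R < T%:R :> R by rewrite ltr_nat.
have TR : 0 < T%:R :> R by rewrite ltr0n.
have m0 : 0 <= m%:R :> R by [].
have kK : x < k%:R.
  apply: lt_le_trans Kx _; rewrite ler_nat; lia.
have k0 : 0 <= k%:R :> R by [].
have h1 : 4 * Bc <= k%:R * dl ^+ 2.
  have : 4 * Bc / dl ^+ 2 <= k%:R.
    apply: le_trans (ltW kK); rewrite /x lerDl divr_ge0 // ?mulr_ge0 // ltW //.
  by rewrite (ler_pdivrMr _ _ (exprn_gt0 2 dl0)).
have h2 : 2 * qstar X <= k%:R * dl.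
  have : 2 * qstar X / dl <= k%:R.
    apply: le_trans (ltW kK); rewrite /x lerDr; apply: divr_ge0; [exact: mulr_ge0 | exact: sqr_ge0].
  by rewrite (ler_pdivrMr _ _ dl0).
set d := debt tau r qstar sigma X k.
have d0 : 0 <= d := debt_ge0 sigma X k.
have dsq : d ^+ 2 <= k%:R * Bc.
  apply: le_trans (lyap Hd k).
  rewrite (bigD1 X) //= lerDl; apply: sumr_ge0 => Y _; apply: sqr_ge0.
have dk : 2 * d <= k%:R * dl.
  have : (2 * d) ^+ 2 <= (k%:R * dl) ^+ 2.
    have e1 : (2 * d) ^+ 2 = 4 * d ^+ 2 by ring.
    have e2 : (k%:R * dl) ^+ 2 = k%:R * (k%:R * dl ^+ 2) by ring.
    rewrite e1 e2; apply: le_trans (_ : 4 * (k%:R * Bc) <= _).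
      by rewrite ler_pM2l.
    by rewrite mulrCA ler_wpM2l.
  by rewrite ler_sqr // ?nnegrE ?mulr_ge0 // ltW.
have Fk := debt_lb sigma X k; rewrite -/d -cum_frames in Fk.
have Cm := cum_mono sigma X (leq_addr m (k * T)%N); rewrite -Htk in Cm.
set c := cum_reward tau r sigma X t in Cm *.
have tpos : 0 < t%:R :> R.
  rewrite tR; apply: (@lt_le_trans _ _ (k%:R * T%:R)); last by rewrite lerDl.
  by rewrite mulr_gt0 // ltr0n (leq_trans (ltn0Sn K) Hk).
rewrite invf_div mulrA ler_pdivlMr //.
have [hq|hq] := leP (qstar X - dl) 0.
  apply: le_trans (_ : 0 <= _); first by apply: mulr_le0_ge0 => //; apply: ltW.
  apply: mulr_ge0 (ltW TR); apply: le_trans Cm.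
  by apply: sumr_ge0 => u _; have /andP[] := slot_bounds sigma X u.
have : (qstar X - dl) * t%:R <= (qstar X - dl) * ((k%:R + 1) * T%:R).
  by rewrite ler_pM2l // tR mulrDl mul1r lerD2l ltW.
move=> h3; apply: le_trans h3 _.
rewrite [c * _]mulrC.
apply: le_trans (_ : T%:R * (k%:R * qstar X - d) <= _); last first.
  by rewrite ler_pM2l //; apply: le_trans Cm; move: Fk; clear; lra.
have e : (k%:R + 1) * (qstar X - dl) <= k%:R * qstar X - d.
  have -> : (k%:R + 1) * (qstar X - dl) = k%:R * qstar X - k%:R * dl + qstar X - dl
    by ring.
  move: dk h2 dl0; clear; lra.
have -> : (qstar X - dl) * ((k%:R + 1) * T%:R) = T%:R * ((k%:R + 1) * (qstar X - dl))
  by ring.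
by rewrite ler_pM2l.
Qed.
End Proofs.

Theorem theorem7 (R : realType) (S : finType) (tau : S -> nat) (r : S -> nat -> R)
  (qstar : S -> R) (d : measure_display) (Omega : measurableType d)
  (P : probability Omega R) (sched : Omega -> nat -> option S) :
  valid_system tau r qstar ->
  strictly_feasible tau r qstar ->
  (forall (w : Omega) (k : nat) (q : S -> R), feasible tau r q ->
     \sum_(X : S) q X * debt tau r qstar (sched w) X k
       <= \sum_(X : S) frame_reward tau r (sched w) X k * debt tau r qstar (sched w) X k) ->
  fulfills tau r P sched qstar.
Proof.
move=> V [eps [eps0 Hf]] H X; apply: aeW => w.
have Hd : forall k, \sum_(X : S) qstar X * debt tau r qstar (sched w) X k
     <= \sum_(X : S) frame_reward tau r (sched w) X k * debt tau r qstar (sched w) X k.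
  move=> k; apply: le_trans (H w k _ Hf); apply: ler_sum => Y _.
  have q0 : 0 < qstar Y by case: V => _ [_ [_ ]]; apply.
  have d0 : 0 <= debt tau r qstar (sched w) Y k.
    by case: (k) => //= k'; rewrite le_max lexx orbT.
  rewrite -mulrA mulrDl mul1r lerDl; apply: mulr_ge0; first exact: ltW.
  by apply: mulr_ge0 => //; exact: ltW.
rewrite /avg_reward limn_einf_lim; apply/lee_subgt0Pr => dl dl0.
have [N HN] := eventually_bound (sigma := sched w) V X dl0 Hd.
rewrite -EFinB; apply: lime_ge; first exact: is_cvg_einfs.
near=> n; apply: le_ereal_inf_tmp => _ [t /= Ht <-]; rewrite lee_fin; apply: HN.
apply: leq_trans Ht; near: n; by exists N.
Unshelve. all: by end_near.
Qed.
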